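(* Assume $r(\boldsymbol\gamma)\le1<2+\alpha\le R(\boldsymbol\gamma)$. Let $(\mathbf A^\dagger,\mathbf q^\dagger)$ maximize $\Omega$, let $(\mathbf A^\ddagger,\mathbf q^\ddagger)$ maximize $\Pi$ (both over $\mathcal A\times\mathbb R^n_{\ge0}$), and let $(\mathbf A^{\rm d},\mathbf q^{\rm d})$ be an equilibrium with $\mathbf A^{\rm d}\mathbf q^{\rm d}=\boldsymbol\beta$ and $\mathbf q^{\rm d}=\boldsymbol\gamma/(2+\alpha)$. Then $$\bar s_{\boldsymbol\gamma}(\mathbf A^\dagger)=\bar s_{\boldsymbol\gamma}(\mathbf A^\ddagger)=\frac{1-\|\boldsymbol\gamma\|_2^2}{n(n-1)}<\frac{(2+\alpha)^2-\|\boldsymbol\gamma\|_2^2}{n(n-1)}=\bar s_{\boldsymbol\gamma}(\mathbf A^{\rm d}).$$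
   Context: Model: integers $n\ge2$, $m\ge2$; $\alpha>0$, $\boldsymbol\beta\in\mathbb R^m$ with $\|\boldsymbol\beta\|_2=1$, $\boldsymbol\gamma\in\mathbb R^n$ with all $\gamma_i>0$. $\mathcal A$ is the set of real $m\times n$ matrices $\mathbf A=[\mathbf a_1,\dots,\mathbf a_n]$ with all $\|\mathbf a_i\|_2=1$. With $\mathbf x=\mathbf A\mathbf q$: $\Omega(\mathbf A,\mathbf q)=\alpha(\mathbf x^\top\boldsymbol\beta-\tfrac12\mathbf x^\top\mathbf x)+\mathbf q^\top\boldsymbol\gamma-\tfrac12\mathbf q^\top\mathbf q$, $\Pi(\mathbf A,\mathbf q)=\alpha(\mathbf x^\top\boldsymbol\beta-\mathbf x^\top\mathbf x)+\mathbf q^\top\boldsymbol\gamma-\mathbf q^\top\mathbf q$. Oligopoly: firm $i$ chooses unit $\mathbf a_i$ and $q_i\ge0$ to maximize $\Pi_i=\alpha q_i\mathbf a_i^\top(\boldsymbol\beta-\sum_{j\ne i}q_j\mathbf a_j)-(1+\alpha)q_i^2+\gamma_iq_i$ given others; an equilibrium is a profile of mutual best responses. $R(\mathbf v)=\|\mathbf v\|_1$, $r(\mathbf v)=2\|\mathbf v\|_\infty-\|\mathbf v\|_1$. Weighted average cosine similarity: $\bar s_{\boldsymbol\gamma}(\mathbf A)=\binom n2^{-1}\sum_{1\le i<j\le n}\gamma_i\gamma_j\mathbf a_i^\top\mathbf a_j$. *)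

(* Defs.v *)
(* R : realFieldType, vectors as column vectors 'cV[R]_k,
   the firms' directions as the columns of A : 'M[R]_(m, n). *)
From HB Require Import structures.
From mathcomp Require Import all_boot all_order all_algebra.
Set Implicit Arguments. Unset Strict Implicit. Unset Printing Implicit Defensive.
Import Order.TTheory GRing.Theory Num.Theory.
Local Open Scope ring_scope.

Section Defs.
Variable R : realFieldType.

Definition dotc (k : nat) (u v : 'cV[R]_k) : R := \sum_(i < k) u i 0 * v i 0.

Definition norm2sq (k : nat) (v : 'cV[R]_k) : R := dotc v v.

Definition norm1 (k : nat) (v : 'cV[R]_k) : R := \sum_(i < k) `|v i 0|.
Definition norminf (k : nat) (v : 'cV[R]_k) : R := \big[Num.max/0]_(i < k) `|v i 0|.

Definition Rg (k : nat) (v : 'cV[R]_k) : R := norm1 v.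
Definition rg (k : nat) (v : 'cV[R]_k) : R := 2 * norminf v - norm1 v.

Definition unit_cols (m n : nat) (A : 'M[R]_(m, n)) : Prop :=
  forall j : 'I_n, norm2sq (col j A) = 1.

Definition nonneg (n : nat) (q : 'cV[R]_n) : Prop := forall j : 'I_n, 0 <= q j 0.

Definition Omega (m n : nat) (alpha : R) (beta : 'cV[R]_m) (gamma : 'cV[R]_n)
    (A : 'M[R]_(m, n)) (q : 'cV[R]_n) : R :=
  let x := A *m q in
  alpha * (dotc x beta - 2^-1 * dotc x x) + dotc q gamma - 2^-1 * dotc q q.

Definition Pi (m n : nat) (alpha : R) (beta : 'cV[R]_m) (gamma : 'cV[R]_n)
    (A : 'M[R]_(m, n)) (q : 'cV[R]_n) : R :=
  let x := A *m q in
  alpha * (dotc x beta - dotc x x) + dotc q gamma - dotc q q.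

Definition is_maximizer (m n : nat)
    (F : 'M[R]_(m, n) -> 'cV[R]_n -> R) (A : 'M[R]_(m, n)) (q : 'cV[R]_n) : Prop :=
  [/\ unit_cols A, nonneg q &
      forall (A' : 'M[R]_(m, n)) (q' : 'cV[R]_n),
        unit_cols A' -> nonneg q' -> F A' q' <= F A q].

Definition firm_profit (m n : nat) (alpha : R) (beta : 'cV[R]_m) (gamma : 'cV[R]_n)
    (A : 'M[R]_(m, n)) (q : 'cV[R]_n) (i : 'I_n) (a : 'cV[R]_m) (qi : R) : R :=
  alpha * qi * dotc a (beta - \sum_(j < n | j != i) q j 0 *: col j A)
  - (1 + alpha) * qi ^+ 2 + gamma i 0 * qi.

Definition is_equilibrium (m n : nat) (alpha : R) (beta : 'cV[R]_m) (gamma : 'cV[R]_n)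
    (A : 'M[R]_(m, n)) (q : 'cV[R]_n) : Prop :=
  [/\ unit_cols A, nonneg q &
      forall (i : 'I_n) (a : 'cV[R]_m) (qi : R),
        norm2sq a = 1 -> 0 <= qi ->
        firm_profit alpha beta gamma A q i a qi
          <= firm_profit alpha beta gamma A q i (col i A) (q i 0)].

Definition sbar (m n : nat) (gamma : 'cV[R]_n) (A : 'M[R]_(m, n)) : R :=
  ('C(n, 2))%:R^-1 *
    \sum_(i < n) \sum_(j < n | (i < j)%N)
       gamma i 0 * gamma j 0 * dotc (col i A) (col j A).

End Defs.

(* Main.v *)
Require Import Defs.
From HB Require Import structures.
From mathcomp Require Import all_boot all_order all_algebra.
From mathcomp Require Import ring lra zify.
From Stdlib Require Import Classical.
Set Implicit Arguments. Unset Strict Implicit. Unset Printing Implicit Defensive.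
Import Order.TTheory GRing.Theory Num.Theory.
Local Open Scope ring_scope.


Section P1.
Variable R : realFieldType.
Implicit Types (k : nat).

Lemma dotcC k (u v : 'cV[R]_k) : dotc u v = dotc v u.
Proof. by rewrite /dotc; apply: eq_bigr => i _; rewrite mulrC. Qed.

Lemma dotcDl k (u v w : 'cV[R]_k) : dotc (u + v) w = dotc u w + dotc v w.
Proof. by rewrite /dotc -big_split; apply: eq_bigr => i _; rewrite mxE mulrDl. Qed.

Lemma dotcDr k (u v w : 'cV[R]_k) : dotc w (u + v) = dotc w u + dotc w v.
Proof. by rewrite dotcC dotcDl !(dotcC w). Qed.

Lemma dotcZl k a (u w : 'cV[R]_k) : dotc (a *: u) w = a * dotc u w.
Proof. by rewrite /dotc mulr_sumr; apply: eq_bigr => i _; rewrite mxE mulrA. Qed.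

Lemma dotcZr k a (u w : 'cV[R]_k) : dotc w (a *: u) = a * dotc w u.
Proof. by rewrite dotcC dotcZl dotcC. Qed.

Lemma dotcNl k (u w : 'cV[R]_k) : dotc (- u) w = - dotc u w.
Proof. by rewrite -scaleN1r dotcZl mulN1r. Qed.

Lemma dotcNr k (u w : 'cV[R]_k) : dotc w (- u) = - dotc w u.
Proof. by rewrite dotcC dotcNl dotcC. Qed.

Lemma dotcBl k (u v w : 'cV[R]_k) : dotc (u - v) w = dotc u w - dotc v w.
Proof. by rewrite dotcDl dotcNl. Qed.

Lemma dotcBr k (u v w : 'cV[R]_k) : dotc w (u - v) = dotc w u - dotc w v.
Proof. by rewrite dotcDr dotcNr. Qed.

Lemma dotc0l k (w : 'cV[R]_k) : dotc 0 w = 0.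
Proof. by rewrite /dotc big1 // => i _; rewrite mxE mul0r. Qed.

Lemma dotc0r k (w : 'cV[R]_k) : dotc w 0 = 0.
Proof. by rewrite dotcC dotc0l. Qed.

Lemma dotc_ge0 k (u : 'cV[R]_k) : 0 <= dotc u u.
Proof. by rewrite /dotc sumr_ge0 // => i _; rewrite -expr2 sqr_ge0. Qed.

Lemma dotc_eq0 k (u : 'cV[R]_k) : dotc u u = 0 -> u = 0.
Proof.
move=> h; apply/matrixP => i j; rewrite (ord1 j) mxE.
have := psumr_eq0P (P := predT) (F := fun i => u i 0 * u i 0) _ h.
move/(_ (fun i _ => ltac:(rewrite -expr2; exact: sqr_ge0)) i isT) => /eqP.
by rewrite mulf_eq0 orbb => /eqP.
Qed.

Lemma dotc_gt0 k (u : 'cV[R]_k) : u != 0 -> 0 < dotc u u.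
Proof.
move=> nz; rewrite lt_def dotc_ge0 andbT; apply/eqP => /dotc_eq0 h.
by rewrite h eqxx in nz.
Qed.

Lemma dotc_sum k I (r : seq I) (P : pred I) (F : I -> 'cV[R]_k) w :
  dotc (\sum_(i <- r | P i) F i) w = \sum_(i <- r | P i) dotc (F i) w.
Proof.
elim/big_rec2: _ => [|i y1 y2 _ <-]; first by rewrite dotc0l.
by rewrite dotcDl.
Qed.

Lemma mulmx_cols m n (A : 'M[R]_(m, n)) (q : 'cV[R]_n) :
  A *m q = \sum_(j < n) q j 0 *: col j A.
Proof.
apply/matrixP => i z; rewrite (ord1 z) !mxE summxE.
by apply: eq_bigr => j _; rewrite !mxE mulrC.
Qed.

End P1.


Section P3.
Variable R : realFieldType.

Lemma sum_bound n (w f h : 'I_n -> R) :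
  (forall j, `|f j| <= h j) -> `|\sum_j w j * f j| <= \sum_j `|w j| * h j.
Proof.
move=> hf; apply: le_trans (ler_norm_sum _ _ _) _.
apply: ler_sum => j _; rewrite normrM; apply: ler_wpM2l => //.
Qed.

Lemma pert_scalar n (N d : R) (w c : 'I_n -> R) :
  0 < N -> d * (\sum_j w j * c j ^+ 2) + (\sum_j w j * c j) ^+ 2 < 0 ->
  exists tau : R,
    0 < - d * (\sum_j w j * (2 * N * (c j * tau) ^+ 2 / (1 + N * (c j * tau) ^+ 2)))
        - (\sum_j w j * (2 * N * (c j * tau) ^+ 2 / (1 + N * (c j * tau) ^+ 2))) ^+ 2 / 2
        - N * (\sum_j w j * (2 * (c j * tau) / (1 + N * (c j * tau) ^+ 2))) ^+ 2 / 2.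
Proof.
move=> N0 hPsi.
set A0 : R := \sum_j w j * c j ^+ 2; set B0 := \sum_j w j * c j.
set Psi : R := d * A0 + B0 ^+ 2.
have hP : Psi < 0 by exact: hPsi.
set K1 : R := \sum_j `|w j| * (c j ^+ 2 * c j ^+ 2).
set L1 : R := \sum_j `|w j| * c j ^+ 2.
set K2 : R := \sum_j `|w j| * (`|c j| * c j ^+ 2).
set L2 : R := \sum_j `|w j| * `|c j|.
have K1ge : 0 <= K1 by apply: sumr_ge0 => j _; apply: mulr_ge0 => //; apply: mulr_ge0; apply: sqr_ge0.
have L1ge : 0 <= L1 by apply: sumr_ge0 => j _; apply: mulr_ge0 => //; apply: sqr_ge0.
have K2ge : 0 <= K2 by apply: sumr_ge0 => j _; apply: mulr_ge0 => //; apply: mulr_ge0 => //; apply: sqr_ge0.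
have L2ge : 0 <= L2 by apply: sumr_ge0 => j _; apply: mulr_ge0.
set K : R := `|d| * K1 + L1 ^+ 2 + 2 * K2 * L2.
have Kge : 0 <= K.
  by rewrite /K; apply: addr_ge0; [apply: addr_ge0; [apply: mulr_ge0|apply: sqr_ge0]|
     apply: mulr_ge0 => //; apply: mulr_ge0].
set om : R := - Psi / (K + 1).
have om0 : 0 < om by rewrite /om divr_gt0 // ?oppr_gt0 //; lra.
set tau : R := om / (N + om).
have tau0 : 0 < tau by rewrite /tau divr_gt0 //; lra.
have tau1 : tau < 1 by rewrite /tau ltr_pdivrMr; lra.
have Ntau : N * tau < om.
  rewrite /tau mulrA ltr_pdivrMr; last lra.
  by rewrite mulrC ltr_pM2l //; lra.
set p : R := N * tau ^+ 2.
have p0 : 0 < p by rewrite /p mulr_gt0 // exprn_gt0.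
have pom : p < om.
  apply: le_lt_trans Ntau; rewrite /p expr2 mulrA.
  have : 0 < N * tau by apply: mulr_gt0.
  nra.
exists tau.
set b := fun j => (1 + c j ^+ 2 * p)^-1.
have bpos : forall j, 0 < 1 + c j ^+ 2 * p.
  by move=> j; have := sqr_ge0 (c j); nra.
have b0 : forall j, 0 < b j by move=> j; rewrite /b invr_gt0.
have b1 : forall j, b j <= 1 by move=> j; rewrite /b invf_le1 //; have := sqr_ge0 (c j); nra.
have b1d : forall j, `|b j - 1| <= c j ^+ 2 * p.
  move=> j; have -> : b j - 1 = - (c j ^+ 2 * p) * b j.
    by rewrite /b; field; rewrite gt_eqF.
  have h1 : 0 <= c j ^+ 2 * p by apply: mulr_ge0; [apply: sqr_ge0|lra].
  have h2 := b0 j; have h3 := b1 j.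
  rewrite normrM normrN (ger0_norm h1) (ger0_norm (ltW h2)).
  nra.
set P1 : R := \sum_j w j * (c j ^+ 2 * b j).
set P2 : R := \sum_j w j * (c j * b j).
have eD : \sum_j w j * (2 * N * (c j * tau) ^+ 2 / (1 + N * (c j * tau) ^+ 2)) = 2 * p * P1.
  rewrite /P1 mulr_sumr; apply: eq_bigr => j _; rewrite /b /p.
  have h : 1 + N * (c j * tau) ^+ 2 = 1 + c j ^+ 2 * (N * tau ^+ 2) by ring.
  rewrite h; field.
by rewrite (gt_eqF (bpos j)).
have eQ : \sum_j w j * (2 * (c j * tau) / (1 + N * (c j * tau) ^+ 2)) = 2 * tau * P2.
  rewrite /P2 mulr_sumr; apply: eq_bigr => j _; rewrite /b /p.
  have h : 1 + N * (c j * tau) ^+ 2 = 1 + c j ^+ 2 * (N * tau ^+ 2) by ring.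
  rewrite h; field.
by rewrite (gt_eqF (bpos j)).
rewrite eD eQ.
have dP1 : `|P1 - A0| <= p * K1.
  have -> : P1 - A0 = \sum_j w j * (c j ^+ 2 * (b j - 1)).
    rewrite /P1 /A0 -sumrB; apply: eq_bigr => j _; ring.
  have -> : p * K1 = \sum_j `|w j| * (c j ^+ 2 * (c j ^+ 2 * p)).
    rewrite /K1 mulr_sumr; apply: eq_bigr => j _; ring.
  apply: sum_bound => j; rewrite normrM ger0_norm ?sqr_ge0 //.
  by apply: ler_wpM2l; [exact: sqr_ge0| exact: b1d].
have dP2 : `|P2 - B0| <= p * K2.
  have -> : P2 - B0 = \sum_j w j * (c j * (b j - 1)).
    rewrite /P2 /B0 -sumrB; apply: eq_bigr => j _; ring.
  have -> : p * K2 = \sum_j `|w j| * (`|c j| * (c j ^+ 2 * p)).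
    rewrite /K2 mulr_sumr; apply: eq_bigr => j _; ring.
  apply: sum_bound => j; rewrite normrM.
  by apply: ler_wpM2l; [exact: normr_ge0| exact: b1d].
have nP1 : `|P1| <= L1.
  apply: sum_bound => j.
  rewrite normrM ger0_norm ?sqr_ge0 // ger0_norm; last by have := b0 j; lra.
  by rewrite ler_piMr ?sqr_ge0.
have nP2 : `|P2| <= L2.
  apply: sum_bound => j.
  rewrite normrM (ger0_norm (ltW (b0 j))).
  by rewrite ler_piMr.
have nB0 : `|B0| <= L2.
  have -> : B0 = \sum_j w j * c j by [].
  by apply: sum_bound => j.
have h1 : d * (P1 - A0) <= `|d| * (p * K1).
  apply: le_trans (ler_norm _) _; rewrite normrM.
  by apply: ler_wpM2l.
have h2 : P1 ^+ 2 <= L1 ^+ 2.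
  move: nP1; rewrite ler_norml => /andP [h h']; nra.
have h3 : (P2 - B0) * (P2 + B0) <= p * K2 * (2 * L2).
  apply: le_trans (ler_norm _) _; rewrite normrM.
  apply: ler_pM => //.
  apply: le_trans (ler_normD _ _) _.
  have -> : 2 * L2 = L2 + L2 by ring.
  exact: lerD.
have hpK : p * K < - Psi.
  have : p * K <= om * K by apply: ler_wpM2r => //; lra.
  have : om * K < - Psi.
    rewrite /om mulrAC ltr_pdivrMr; last lra.
    have : 0 < - Psi by lra.
    nra.
  lra.
have -> : - d * (2 * p * P1) - (2 * p * P1) ^+ 2 / 2 - N * (2 * tau * P2) ^+ 2 / 2
   = 2 * p * (- d * P1 - p * P1 ^+ 2 - P2 ^+ 2).
  by rewrite /p; field.
apply: mulr_gt0; first lra.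
have : p * (P1 ^+ 2) <= p * (L1 ^+ 2) by apply: ler_wpM2l => //; lra.
rewrite /K /Psi in hpK.
have e3 : P2 ^+ 2 = B0 ^+ 2 + (P2 - B0) * (P2 + B0) by ring.
nra.
Qed.
End P3.


Section P4.
Variable R : realFieldType.

Definition fx m (beta x : 'cV[R]_m) := dotc x beta - 2^-1 * dotc x x.

Lemma OmegaE m n alpha beta gamma (A : 'M[R]_(m, n)) q :
  Omega alpha beta gamma A q = alpha * fx beta (A *m q) + dotc q gamma - 2^-1 * dotc q q.
Proof. by []. Qed.

Lemma dotc_pair m (beta z : 'cV[R]_m) a b :
  dotc beta beta = 1 -> dotc z beta = 0 ->
  dotc (a *: beta + b *: z) beta = a /\
  dotc (a *: beta + b *: z) (a *: beta + b *: z) = a ^+ 2 + b ^+ 2 * dotc z z.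
Proof.
move=> hb hz; have hz' : dotc beta z = 0 by rewrite dotcC.
split.
  by rewrite dotcDl !dotcZl hb hz; ring.
rewrite !dotcDl !dotcDr !dotcZl !dotcZr hb hz hz'; ring.
Qed.

Lemma col_mk m n (F : 'I_n -> 'cV[R]_m) j :
  col j (\matrix_(r, k) F k r 0) = F j.
Proof. by apply/matrixP => r s; rewrite (ord1 s) !mxE. Qed.

Lemma collinear_improve m n (alpha : R) (beta : 'cV[R]_m) (gamma : 'cV[R]_n)
  (A : 'M[R]_(m, n)) (q : 'cV[R]_n) (eps : 'I_n -> R) (z : 'cV[R]_m) (c : 'I_n -> R) :
  0 < alpha -> dotc beta beta = 1 -> dotc z beta = 0 -> 0 < dotc z z ->
  (forall j, col j A = eps j *: beta) -> (forall j, eps j ^+ 2 = 1) ->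
  (1 - \sum_j q j 0 * eps j) * (\sum_j (q j 0 * eps j) * c j ^+ 2)
    + (\sum_j (q j 0 * eps j) * c j) ^+ 2 < 0 ->
  exists A', unit_cols A' /\ Omega alpha beta gamma A q < Omega alpha beta gamma A' q.
Proof.
move=> a0 hb hz hN hcol heps hPsi.
set N : R := dotc z z.
have [tau htau] := pert_scalar hN hPsi.
set w : 'I_n -> R := fun j => q j 0 * eps j.
set dd := fun j => 2 * N * (c j * tau) ^+ 2 / (1 + N * (c j * tau) ^+ 2).
set ss := fun j => 2 * (c j * tau) / (1 + N * (c j * tau) ^+ 2).
have pos : forall j, 0 < 1 + N * (c j * tau) ^+ 2.
  move=> j; have := sqr_ge0 (c j * tau); have := hN; move=> h1 h2; apply: ltr_pwDl => //; exact: mulr_ge0 (ltW h1) h2.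
set u := fun j => (1 - dd j) *: beta + ss j *: z.
exists (\matrix_(r, k) (eps k *: u k) r 0); split.
  move=> j; rewrite /norm2sq col_mk dotcZl dotcZr mulrA -expr2 heps mul1r.
  have [_ ->] := dotc_pair (1 - dd j) (ss j) hb hz.
  rewrite /dd /ss -/N; field.
by rewrite (gt_eqF (pos j)).
rewrite !OmegaE ltrD2r ltrD2r ltr_pM2l //.
have ex : A *m q = (\sum_j w j) *: beta.
  rewrite mulmx_cols scaler_suml; apply: eq_bigr => j _.
  by rewrite hcol scalerA.
have ex' : (\matrix_(r, k) (eps k *: u k) r 0) *m q =
    (\sum_j w j * (1 - dd j)) *: beta + (\sum_j w j * ss j) *: z.
  rewrite mulmx_cols !scaler_suml -big_split; apply: eq_bigr => j _.
  rewrite col_mk /u scalerDr !scalerA /w.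
  by rewrite scalerDr !scalerA !mulrA.
rewrite /fx ex ex'.
rewrite !dotcZl !dotcZr hb mulr1.
have [e3 e4] := dotc_pair (\sum_j w j * (1 - dd j)) (\sum_j w j * ss j) hb hz.
rewrite e3 e4 -/N.
have -> : \sum_j w j * (1 - dd j) = \sum_j w j - \sum_j w j * dd j.
  by rewrite -sumrB; apply: eq_bigr => j _; ring.
rewrite -subr_gt0.
move: htau; rewrite -/w -/N.
have -> : \sum_j w j * (2 * N * (c j * tau) ^+ 2 / (1 + N * (c j * tau) ^+ 2)) = \sum_j w j * dd j by [].
have -> : \sum_j w j * (2 * (c j * tau) / (1 + N * (c j * tau) ^+ 2)) = \sum_j w j * ss j by [].
move=> h; apply: lt_le_trans h _; rewrite le_eqVlt; apply/orP; left; apply/eqP.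
have ew : \sum_j q j 0 * eps j = \sum_j w j by [].
by rewrite ew; field.
Qed.

End P4.


Section P5.
Variable R : realFieldType.

Lemma parallel k (b v : 'cV[R]_k) : dotc b b = 1 ->
  (forall a, dotc a a = 1 -> dotc a v <= dotc b v) ->
  v = dotc b v *: b /\ 0 <= dotc b v.
Proof.
move=> hb hmax.
have key : forall w, w != 0 -> 0 <= dotc b w * dotc w v.
  move=> w wn0; have ww := dotc_gt0 wn0.
  set a := b - (2 * dotc b w / dotc w w) *: w.
  have aa : dotc a a = 1.
    rewrite /a !dotcBl !dotcBr !dotcZl !dotcZr hb (dotcC w b).
    by field; rewrite gt_eqF.
  have := hmax a aa; rewrite /a dotcBl dotcZl.
  move=> h; have h' : 0 <= 2 * dotc b w / dotc w w * dotc w v by lra.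
  have -> : dotc b w * dotc w v = (2 * dotc b w / dotc w w * dotc w v) * dotc w w / 2.
    by field; rewrite gt_eqF.
  apply: divr_ge0; last lra.
  by apply: mulr_ge0 => //; apply: ltW.
set u := v - dotc b v *: b.
have ub : dotc b u = 0 by rewrite /u dotcBr dotcZr hb mulr1 subrr.
have uv : dotc u v = dotc u u.
  by rewrite {2}/u dotcBr dotcZr (dotcC u b) ub mulr0 subr0.
have hb0 : 0 <= dotc b v.
  have bn0 : b != 0 by apply/eqP => hb0; rewrite hb0 dotc0l in hb; move: hb; apply/eqP; rewrite eq_sym oner_neq0.
  by have := key b bn0; rewrite hb mul1r.
split => //.
have uu0 : dotc u u = 0.
  apply/eqP; rewrite eq_le dotc_ge0 andbT; rewrite leNgt; apply/negP => upos.
  set s := - (dotc b v + 1) / dotc u u.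
  have wn0 : b + s *: u != 0.
    apply/eqP => h0; have : dotc b (b + s *: u) = 0 by rewrite h0 dotc0r.
    by rewrite dotcDr dotcZr ub mulr0 addr0 hb => /eqP; rewrite oner_eq0.
  have := key _ wn0.
  rewrite dotcDr dotcZr ub mulr0 addr0 hb mul1r dotcDl dotcZl uv /s.
  rewrite divfK ?gt_eqF //; lra.
have u0 := dotc_eq0 uu0.
by apply/eqP; rewrite -subr_eq0 -/u u0.
Qed.

End P5.


Section P6.
Variable R : realFieldType.

Definition repl m n (A : 'M[R]_(m, n)) i (a : 'cV[R]_m) :=
  \matrix_(r, k) (if k == i then a else col k A) r 0.

Lemma col_repl m n (A : 'M[R]_(m, n)) i a k :
  col k (repl A i a) = if k == i then a else col k A.
Proof. by rewrite /repl col_mk. Qed.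

Lemma mul_repl m n (A : 'M[R]_(m, n)) i a (q : 'cV[R]_n) :
  repl A i a *m q = A *m q + q i 0 *: (a - col i A).
Proof.
rewrite !mulmx_cols (bigD1 i) //= [in RHS](bigD1 i) //= col_repl eqxx.
rewrite (eq_bigr (fun k => q k 0 *: col k A)); last first.
  by move=> k /negbTE hk; rewrite col_repl hk.
by rewrite scalerBr (addrC (_ + _) (_ - _)) addrA subrK.
Qed.

Lemma unit_cols_repl m n (A : 'M[R]_(m, n)) i a :
  unit_cols A -> dotc a a = 1 -> unit_cols (repl A i a).
Proof.
move=> hA ha k; rewrite /norm2sq col_repl; case: (k == i) => //; exact: hA.
Qed.

Lemma fx_shift m (beta x h : 'cV[R]_m) s :
  fx beta (x + s *: h) - fx beta x
    = s * dotc h beta - s * dotc h x - 2^-1 * s ^+ 2 * dotc h h.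
Proof.
rewrite /fx !(dotcDl, dotcDr, dotcZl, dotcZr) (dotcC x h).
by field.
Qed.

Lemma col_opt m n alpha (beta : 'cV[R]_m) (gamma : 'cV[R]_n) A q i :
  0 < alpha -> is_maximizer (Omega alpha beta gamma) A q -> 0 < q i 0 ->
  forall a, dotc a a = 1 ->
   dotc a (beta - A *m q + q i 0 *: col i A)
     <= dotc (col i A) (beta - A *m q + q i 0 *: col i A).
Proof.
move=> a0 [hA hq hmax] qi a ha.
have := hmax (repl A i a) q (unit_cols_repl i hA ha) hq.
rewrite !OmegaE lerD2r lerD2r ler_pM2l // mul_repl -subr_le0 fx_shift.
have hi : dotc (col i A) (col i A) = 1 by exact: hA.
rewrite !(dotcBl, dotcDr, dotcBr, dotcZr, dotcZl) ha hi.
rewrite (dotcC (col i A) a).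
move=> h.
have : q i 0 * (dotc a beta - dotc a (A *m q) + q i 0 * dotc a (col i A)
   - (dotc (col i A) beta - dotc (col i A) (A *m q) + q i 0)) <= 0.
  move: h; rewrite !dotcNr hi !(dotcC a (col i A)); nra.
rewrite pmulr_rle0 //.
rewrite !dotcNr; lra.
Qed.

End P6.


Section P7.
Variable R : realFieldType.

Lemma dotc_delta n (i : 'I_n) (v : 'cV[R]_n) : dotc (delta_mx i 0) v = v i 0.
Proof.
rewrite /dotc (bigD1 i) //= big1 ?addr0; first by rewrite mxE !eqxx mul1r.
by move=> j /negbTE hj; rewrite mxE hj mul0r.
Qed.

Lemma q_step m n (alpha : R) (beta : 'cV[R]_m) (gamma : 'cV[R]_n) A q i s :
  dotc (col i A) (col i A) = 1 ->
  Omega alpha beta gamma A (q + s *: delta_mx i 0) - Omega alpha beta gamma A q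
  = s * (alpha * dotc (col i A) (beta - A *m q) + gamma i 0 - q i 0)
    - 2^-1 * s ^+ 2 * (alpha + 1).
Proof.
move=> hi.
rewrite !OmegaE mulmxDr -scalemxAr -colE.
have e := fx_shift beta (A *m q) (col i A) s.
have -> : fx beta (A *m q + s *: col i A) = fx beta (A *m q) +
   (s * dotc (col i A) beta - s * dotc (col i A) (A *m q) - 2^-1 * s ^+ 2 * dotc (col i A) (col i A)).
  by rewrite -e; ring.
rewrite hi !(dotcDl, dotcDr, dotcZl, dotcZr) !dotc_delta.
rewrite (dotcC q (delta_mx i 0)) dotc_delta dotcNr mxE !eqxx mulr1.
rewrite /= mulr1; by field.
Qed.

Lemma q_stat m n alpha (beta : 'cV[R]_m) (gamma : 'cV[R]_n) A q i :
  0 < alpha -> is_maximizer (Omega alpha beta gamma) A q ->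
  let D := alpha * dotc (col i A) (beta - A *m q) + gamma i 0 - q i 0 in
  D <= 0 /\ (0 < q i 0 -> D = 0).
Proof.
move=> a0 [hA hq hmax] D.
have hi : dotc (col i A) (col i A) = 1 by exact: hA.
have step : forall s, 0 <= q i 0 + s -> s * D - 2^-1 * s ^+ 2 * (alpha + 1) <= 0.
  move=> s hs; rewrite -q_step //.
  rewrite subr_le0; apply: hmax => //.
  move=> j; rewrite !mxE; case: (eqVneq j i) => [->|hj].
    by rewrite !eqxx mulr1.
  by rewrite /= mulr0 addr0; exact: hq.
have Dle : D <= 0.
  rewrite leNgt; apply/negP => Dp.
  have := step (D / (1 + alpha)).
  have qi := hq i.
  have h1 : 0 < D / (1 + alpha) by rewrite divr_gt0 //; lra.
  move=> /(_ ltac:(lra)).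
  have -> : D / (1 + alpha) * D - 2^-1 * (D / (1 + alpha)) ^+ 2 * (alpha + 1)
     = 2^-1 * (D * (D / (1 + alpha))).
    by field; lra.
  have : 0 < D * (D / (1 + alpha)) by apply: mulr_gt0.
  lra.
split => // qp.
apply/eqP; rewrite eq_le Dle /= leNgt; apply/negP => Dn.
have [hc|hc] := lerP (q i 0 * (1 + alpha)) (- D).
  have := step (- q i 0); rewrite subrr lexx => /(_ isT).
  have : 0 < q i 0 * (- D - 2^-1 * q i 0 * (1 + alpha)).
    by apply: mulr_gt0 => //; nra.
  move=> h1 h2; suff : 0 < 0 :> R by rewrite ltxx.
  apply: lt_le_trans h1 _; apply: le_trans h2; rewrite le_eqVlt; apply/orP; left.
  by apply/eqP; ring.
have := step (D / (1 + alpha)).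
have h1 : 0 < - D / (1 + alpha) by rewrite divr_gt0 //; lra.
have h2 : - D / (1 + alpha) < q i 0.
  by rewrite ltr_pdivrMr; lra.
have -> : D / (1 + alpha) = - (- D / (1 + alpha)) by rewrite mulNr opprK.
move=> /(_ ltac:(lra)).
have -> : - (- D / (1 + alpha)) * D - 2^-1 * (- (- D / (1 + alpha))) ^+ 2 * (alpha + 1)
   = 2^-1 * (D * (D / (1 + alpha))).
  by field; lra.
have : 0 < D * (D / (1 + alpha)).
  by rewrite -mulrNN -mulNr; apply: mulr_gt0; lra.
lra.
Qed.

End P7.


Section P8.
Variable R : realFieldType.

Lemma eps_cases (e : R) : e ^+ 2 = 1 -> e = 1 \/ e = -1.
Proof.
move=> h; have : (e - 1) * (e + 1) = 0.
  have -> : (e - 1) * (e + 1) = e ^+ 2 - 1 by ring.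
  by rewrite h subrr.
move/eqP; rewrite mulf_eq0 => /orP [/eqP h1|/eqP h1]; [left|right]; lra.
Qed.

Lemma sum_two n (i j : 'I_n) (F : 'I_n -> R) : i != j ->
  (forall k, k != i -> k != j -> F k = 0) -> \sum_k F k = F i + F j.
Proof.
move=> ij h; rewrite (bigD1 i) //= (bigD1 j) /=; last by rewrite eq_sym.
rewrite big1 ?addr0 // => k /andP [ki kj]; exact: h.
Qed.

Lemma sum_one_rest n (k : 'I_n) (F : 'I_n -> R) :
  \sum_j F j = F k + \sum_(j | j != k) F j.
Proof. by rewrite (bigD1 k). Qed.

Lemma collinear_scalar n (alpha d : R) (eps q gamma : 'I_n -> R) :
  (1 < n)%N -> 0 < alpha -> (forall j, eps j ^+ 2 = 1) -> (forall j, 0 < q j) ->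
  (forall j, 0 < gamma j) -> (forall j, q j = gamma j + alpha * eps j * d) ->
  d = 1 - \sum_j q j * eps j -> d != 0 ->
  (forall k, 2 * gamma k - \sum_j gamma j <= 1) -> 1 < \sum_j gamma j ->
  exists c : 'I_n -> R,
    d * (\sum_j (q j * eps j) * c j ^+ 2) + (\sum_j (q j * eps j) * c j) ^+ 2 < 0.
Proof.
move=> n1 a0 heps qp gp hq hd dn0 hrg hR.
have eS : d * (1 + n%:R * alpha) = 1 - \sum_j gamma j * eps j.
  have : \sum_j q j * eps j = \sum_j gamma j * eps j + n%:R * alpha * d.
    rewrite (eq_bigr (fun j => gamma j * eps j + alpha * d)); last first.
      move=> j _; rewrite hq.
      have -> : (gamma j + alpha * eps j * d) * eps j = gamma j * eps j + alpha * d * (eps j ^+ 2) by ring.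
      by rewrite heps mulr1.
    rewrite big_split /= sumr_const card_ord.
    rewrite -mulr_natl; ring.
  lra.
have epsv : forall j, eps j = 1 \/ eps j = -1 by move=> j; apply: eps_cases.
have nalpha : 0 <= n%:R * alpha by apply: mulr_ge0; [exact: ler0n|lra].
have epsd : forall j, eps j * d < 0 -> forall l, eps l * d < 0 -> eps j = eps l.
  move=> j hj l hl; case: (epsv j) => ej; case: (epsv l) => el; rewrite ej el //;
  rewrite ej el in hj hl; lra.
have opos : 0 < 1 + n%:R * alpha by lra.
case: (classic (exists i j, i != j /\ eps i * d < 0 /\ eps j * d < 0)).
  move=> [i [j [ij [hi hj]]]].
  have eij := epsd _ hi _ hj.
  exists (fun k => if k == i then q j else if k == j then - q i else 0).
  rewrite (@sum_two _ i j _ ij); last by move=> k /negbTE -> /negbTE ->; rewrite expr0n /= mulr0.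
  rewrite (@sum_two _ i j _ ij); last by move=> k /negbTE -> /negbTE ->; rewrite mulr0.
  rewrite eqxx eq_sym (negbTE ij) eqxx -eij.
  have -> : q j * eps i * (- q i) = - (q i * eps i * q j) by ring.
  rewrite addrN expr0n /= addr0.
  have -> : d * (q i * eps i * q j ^+ 2 + q j * eps i * (- q i) ^+ 2)
     = (eps i * d) * (q i * q j * (q i + q j)) by ring.
  rewrite nmulr_rlt0 //; apply: mulr_gt0; [apply: mulr_gt0|]; rewrite ?qp //.
  by apply: addr_gt0.
move=> nA.
have nA' : forall i j, i != j -> eps i * d < 0 -> eps j * d < 0 -> False.
  by move=> i j ij hi hj; apply: nA; exists i, j.
have gtd : forall j, eps j * d < 0 -> 0 < d -> eps j = -1.
  by move=> j hj d0; case: (epsv j) => // ej; rewrite ej in hj; lra.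
have gtd' : forall j, eps j * d < 0 -> d < 0 -> eps j = 1.
  by move=> j hj d0; case: (epsv j) => // ej; rewrite ej in hj; lra.
have ged : forall j, ~ eps j * d < 0 -> 0 < d -> eps j = 1.
  move=> j hj d0; case: (epsv j) => // ej; rewrite ej in hj; exfalso; apply: hj; lra.
have ged' : forall j, ~ eps j * d < 0 -> d < 0 -> eps j = -1.
  move=> j hj d0; case: (epsv j) => // ej; rewrite ej in hj; exfalso; apply: hj; lra.
have dsgn : d < 0 \/ 0 < d.
  by case: (ltgtP d 0) => [h|h|h]; [left|right|]; rewrite // h eqxx in dn0.
case: (classic (exists k, eps k * d < 0)).
  move=> [k hk].
  have oth : forall j, j != k -> ~ eps j * d < 0.
    by move=> j jk hj; apply: (nA' j k).
  case: dsgn => dsg.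
    exfalso.
    have ek := gtd' _ hk dsg.
    have hS : \sum_j gamma j * eps j = 2 * gamma k - \sum_j gamma j.
      rewrite (sum_one_rest k (fun j => gamma j * eps j)) (sum_one_rest k gamma) ek.
      rewrite (eq_bigr (fun j => - gamma j)); last first.
        by move=> j jk; rewrite (ged' _ (oth _ jk) dsg) mulrN1.
      rewrite sumrN; ring.
    have := hrg k.
    have : d * (1 + n%:R * alpha) < 0 by rewrite pmulr_llt0.
    lra.
  have ek := gtd _ hk dsg.
  set Q := \sum_(j | j != k) q j.
  have Qp : 0 < Q.
    have [j jk] : exists j : 'I_n, j != k.
      case: (eqVneq k (Ordinal n1)) => [e|ne].
        exists (Ordinal (ltnW n1)); apply/eqP => /(f_equal val) /=.
        by rewrite e.
      by exists (Ordinal n1); rewrite eq_sym.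
    rewrite /Q (bigD1 j) //=; apply: ltr_pwDl => //.
    by apply: sumr_ge0 => l _; apply: ltW.
  have ew : forall j, j != k -> q j * eps j = q j.
    by move=> j jk; rewrite (ged _ (oth _ jk) dsg) mulr1.
  set kap := q k / (d + Q).
  exists (fun j => if j == k then 1 else kap).
  have s1 : \sum_(j | j != k) q j * eps j * (if j == k then 1 else kap) ^+ 2 = Q * kap ^+ 2.
    rewrite /Q mulr_suml; apply: eq_bigr => j jk; by rewrite (negbTE jk) ew.
  have s2 : \sum_(j | j != k) q j * eps j * (if j == k then 1 else kap) = Q * kap.
    rewrite /Q mulr_suml; apply: eq_bigr => j jk; by rewrite (negbTE jk) ew.
  rewrite !(sum_one_rest k) s1 s2 eqxx ek.
  have hd' : d = 1 - (- q k + Q).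
    rewrite hd (sum_one_rest k) ek mulrN1; congr (_ - (_ + _)).
    rewrite /Q; apply: eq_bigr => j jk; exact: ew.
  have dQ : 0 < d + Q by lra.
  have -> : d * (q k * -1 * 1 ^+ 2 + Q * kap ^+ 2) + (q k * -1 * 1 + Q * kap) ^+ 2
     = - (d * q k / (d + Q)).
    have eQ : Q = 1 + q k - d by lra.
    have hq1 : 1 + q k != 0 by have := qp k; rewrite gt_eqF //; lra.
    rewrite /kap eQ; field.
    by have -> : d + (1 + q k - d) = 1 + q k by ring.
  rewrite oppr_lt0; apply: divr_gt0 => //; apply: mulr_gt0 => //.
move=> nC.
have allge : forall j, ~ eps j * d < 0 by move=> j hj; apply: nC; exists j.
exfalso.
case: dsgn => dsg.
  have hS : \sum_j gamma j * eps j = - \sum_j gamma j.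
    rewrite -sumrN; apply: eq_bigr => j _; rewrite (ged' _ (allge j) dsg); ring.
  have : d * (1 + n%:R * alpha) < 0 by rewrite pmulr_llt0.
  have : 0 <= \sum_j gamma j by apply: sumr_ge0 => j _; exact: ltW (gp j).
  lra.
have hS : \sum_j gamma j * eps j = \sum_j gamma j.
  apply: eq_bigr => j _; rewrite (ged _ (allge j) dsg); ring.
have : 0 < d * (1 + n%:R * alpha) by apply: mulr_gt0.
lra.
Qed.
End P8.


Section P9.
Variable R : realFieldType.

Lemma exists_perp m (beta : 'cV[R]_m) : (1 < m)%N -> dotc beta beta = 1 ->
  exists z, dotc z beta = 0 /\ 0 < dotc z z.
Proof.
move=> m1 hb.
have [k hk] : exists k, beta k 0 != 0.
  apply: NNPP => hn.
  have : dotc beta beta = 0.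
    rewrite /dotc big1 // => i _.
    case: (eqVneq (beta i 0) 0) => [->|h]; first by rewrite mul0r.
    by exfalso; apply: hn; exists i.
  by rewrite hb => /eqP; rewrite oner_eq0.
pose o0 := Ordinal (ltnW m1 : (0 < m)%N).
pose o1 := Ordinal m1.
pose l := if k == o0 then o1 else o0.
have lk : l != k.
  rewrite /l; case: (eqVneq k o0) => [e|ne]; last by rewrite eq_sym.
  by rewrite e; apply/eqP => /(f_equal val).
exists (beta l 0 *: delta_mx k 0 - beta k 0 *: delta_mx l 0).
have dkl : (delta_mx l 0 : 'cV[R]_m) k 0 = 0 by rewrite mxE eq_sym (negbTE lk) /= .
have dlk : (delta_mx k 0 : 'cV[R]_m) l 0 = 0 by rewrite mxE (negbTE lk) /= .
have dkk : (delta_mx k 0 : 'cV[R]_m) k 0 = 1 by rewrite mxE !eqxx.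
have dll : (delta_mx l 0 : 'cV[R]_m) l 0 = 1 by rewrite mxE !eqxx.
split.
  by rewrite dotcBl !dotcZl !dotc_delta; ring.
rewrite !(dotcBl, dotcBr, dotcZl, dotcZr) !dotc_delta.
rewrite dkl dlk dkk dll.
have : 0 < beta k 0 ^+ 2 by rewrite exprn_even_gt0.
have := sqr_ge0 (beta l 0).
nra.
Qed.

End P9.


Section P10.
Variable R : realFieldType.

Lemma max_qpos m n (alpha : R) (beta : 'cV[R]_m) (gamma : 'cV[R]_n) A q :
  0 < alpha -> (forall i, 0 < gamma i 0) ->
  is_maximizer (Omega alpha beta gamma) A q -> forall i, 0 < q i 0.
Proof.
move=> a0 gp hmx i; have [hA hq hmax] := hmx.
rewrite lt_def hq andbT; apply/negP => /eqP q0.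
set A2 := repl A i (- col i A).
have hi : dotc (col i A) (col i A) = 1 by exact: hA.
have x2 : A2 *m q = A *m q by rewrite mul_repl q0 scale0r addr0.
have hmx2 : is_maximizer (Omega alpha beta gamma) A2 q.
  split => //.
    apply: unit_cols_repl => //; by rewrite dotcNl dotcNr opprK.
  move=> A' q' hA' hq'; rewrite [Omega _ _ _ A2 q]OmegaE x2 -OmegaE; exact: hmax.
have [D1 _] := q_stat i a0 hmx.
have [D2 _] := q_stat i a0 hmx2.
move: D1 D2; rewrite x2 /A2 col_repl eqxx dotcNl q0.
have := gp i; lra.
Qed.

Lemma omega_max_opt m n (alpha : R) (beta : 'cV[R]_m) (gamma : 'cV[R]_n) A q :
  (1 < n)%N -> (1 < m)%N -> 0 < alpha -> dotc beta beta = 1 ->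
  (forall i, 0 < gamma i 0) ->
  (forall k, 2 * gamma k 0 - \sum_j gamma j 0 <= 1) -> 1 < \sum_j gamma j 0 ->
  is_maximizer (Omega alpha beta gamma) A q -> q = gamma /\ A *m q = beta.
Proof.
move=> n1 m1 a0 hb gp hrg hR hmx.
have qp := max_qpos a0 gp hmx.
have [hA hq hmax] := hmx.
have hi : forall i, dotc (col i A) (col i A) = 1 by move=> i; exact: hA.
set e := beta - A *m q.
set mu := fun i => dotc (col i A) e.
have he : forall i, e = mu i *: col i A.
  move=> i.
  have [hv _] := parallel (hi i) (col_opt a0 hmx (qp i)).
  move: hv; rewrite -/e dotcDr dotcZr hi mulr1 => hv.
  have : e = (dotc (col i A) e + q i 0) *: col i A - q i 0 *: col i A by rewrite -hv addrK.
  by rewrite scalerDl addrK.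
have hD : forall i, q i 0 = gamma i 0 + alpha * mu i.
  move=> i; have [_ h] := q_stat i a0 hmx; have := h (qp i); rewrite -/e -/(mu i); lra.
case: (eqVneq e 0) => [e0|en0].
  have mu0 : forall i, mu i = 0 by move=> i; rewrite /mu e0 dotc0r.
  split.
    by apply/matrixP => i j; rewrite (ord1 j) hD mu0 mulr0 addr0.
  by apply/eqP; rewrite eq_sym -subr_eq0 -/e e0.
exfalso.
have mun0 : forall i, mu i != 0.
  by move=> i; apply/eqP => h; move: en0; rewrite (he i) h scale0r eqxx.
have ee : forall i, dotc e e = mu i ^+ 2.
  by move=> i; rewrite (he i) dotcZl dotcZr hi; ring.
have aE : forall i, col i A = (mu i)^-1 *: e.
  by move=> i; rewrite (he i) scalerA mulVf ?scale1r.
set C := \sum_j q j 0 / mu j.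
have xE : A *m q = C *: e.
  rewrite mulmx_cols /C scaler_suml; apply: eq_bigr => j _.
  by rewrite aE scalerA.
have bE : beta = (C + 1) *: e.
  by rewrite scalerDl scale1r -xE /e addrC subrK.
set eps := fun i => dotc (col i A) beta.
have epsE : forall i, eps i = (C + 1) * mu i by move=> i; rewrite /eps bE dotcZr.
have hCe : (C + 1) ^+ 2 * dotc e e = 1.
  by move: hb; rewrite bE dotcZl dotcZr mulrA -expr2.
have eps2 : forall i, eps i ^+ 2 = 1.
  by move=> i; rewrite epsE exprMn -(ee i) hCe.
have colE' : forall i, col i A = eps i *: beta.
  move=> i; rewrite aE bE scalerA; congr (_ *: _).
  have h1 : (C + 1) ^+ 2 * mu i ^+ 2 = 1 by rewrite -ee.
  apply: (mulfI (mun0 i)); rewrite mulfV // -[X in X = _]h1 epsE; ring.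
set t := \sum_j q j 0 * eps j.
have xt : A *m q = t *: beta.
  rewrite mulmx_cols /t scaler_suml; apply: eq_bigr => j _.
  by rewrite colE' scalerA.
have eE : e = (1 - t) *: beta by rewrite /e xt scalerBl scale1r.
have muE : forall i, mu i = eps i * (1 - t).
  by move=> i; rewrite /mu eE dotcZr mulrC.
have dn0 : 1 - t != 0.
  by apply/eqP => h; move: en0; rewrite eE h scale0r eqxx.
have [c hc] : exists c : 'I_n -> R,
    (1 - t) * (\sum_j (q j 0 * eps j) * c j ^+ 2) + (\sum_j (q j 0 * eps j) * c j) ^+ 2 < 0.
  apply: (collinear_scalar (alpha:=alpha) (d:=1-t) (eps:=eps) (q:=fun j => q j 0) (gamma:=fun j => gamma j 0)) => //.
  by move=> j; rewrite hD muE mulrA.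
have [z [hz hN]] := exists_perp m1 hb.
have [A' [hA' hlt]] := @collinear_improve _ _ _ alpha beta gamma A q eps z c a0 hb hz hN colE' eps2 hc.
have := hmax A' q hA' hq.
by rewrite leNgt hlt.
Qed.

End P10.


Section P11.
Variable R : realFieldType.

Lemma bin2_double n : ('C(n, 2) * 2 = n * (n - 1))%N.
Proof.
elim: n => [|n IH] //.
rewrite binS bin1 mulnDl IH.
case: n {IH} => [|n] //=.
rewrite !subn1 /=; lia.
Qed.

Lemma tri_sum n (F : 'I_n -> 'I_n -> R) : (forall i j : 'I_n, F i j = F j i) ->
  \sum_(i < n) \sum_(j < n) F i j = \sum_(i < n) F i i + 2 * \sum_(i < n) \sum_(j < n | (i < j)%N) F i j.
Proof.
move=> Fs.
have split : forall i : 'I_n, \sum_(j < n) F i j =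
   \sum_(j < n | (i < j)%N) F i j + F i i + \sum_(j < n | (j < i)%N) F i j.
  move=> i; rewrite (bigD1 i) //= !(big_mkcond (fun j => _ < _)%N) /=.
  rewrite [RHS]addrAC [RHS]addrC; congr (_ + _).
  rewrite -big_split [LHS]big_mkcond /=; apply: eq_bigr => j _.
  case: (ltngtP i j) => [h|h|h].
  - have -> : (j != i) = true by apply/eqP => e; move: h; rewrite e ltnn.
    by rewrite addr0.
  - have -> : (j != i) = true by apply/eqP => e; move: h; rewrite e ltnn.
    by rewrite add0r.
  - have e : i = j by apply: val_inj.
    by rewrite e eqxx /= addr0.
rewrite (eq_bigr _ (fun i _ => split i)) !big_split /=.
have : \sum_(i < n) \sum_(j < n | (j < i)%N) F i j = \sum_(i < n) \sum_(j < n | (i < j)%N) F i j.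
  rewrite (eq_bigr (fun i : 'I_n => \sum_(j < n) if (j < i)%N then F i j else 0)); last first.
    by move=> i _; rewrite big_mkcond.
  rewrite exchange_big /=.
  apply: eq_bigr => i _; rewrite [RHS]big_mkcond /=.
  by apply: eq_bigr => j _; rewrite Fs.
move=> ->; ring.
Qed.

End P11.

Section P12.
Variable R : realFieldType.

Lemma sbar_formula m n (gamma : 'cV[R]_n) (A : 'M[R]_(m, n)) v :
  (1 < n)%N -> unit_cols A -> A *m gamma = v ->
  sbar gamma A = (dotc v v - dotc gamma gamma) / (n * (n - 1))%:R.
Proof.
move=> n1 hA hv.
have hvv : dotc v v = \sum_(i < n) \sum_(j < n)
    gamma i 0 * gamma j 0 * dotc (col i A) (col j A).
  rewrite -hv mulmx_cols dotc_sum; apply: eq_bigr => i _.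
  rewrite dotcC dotc_sum; apply: eq_bigr => j _.
  rewrite dotcZl dotcZr (dotcC (col j A)); ring.
rewrite hvv tri_sum; last by move=> i j; rewrite dotcC; ring.
have -> : \sum_(i < n) gamma i 0 * gamma i 0 * dotc (col i A) (col i A) = dotc gamma gamma.
  by apply: eq_bigr => i _; have h := hA i; rewrite /norm2sq in h; rewrite h mulr1.
rewrite /sbar.
have hC : ('C(n, 2))%:R * 2 = (n * (n - 1))%:R :> R.
  by rewrite -(natrM R _ 2) bin2_double.
have Cn0 : ('C(n, 2))%:R != 0 :> R.
  by rewrite pnatr_eq0 -lt0n bin_gt0.
rewrite -hC addrC addKr; field; by rewrite Cn0.
Qed.

End P12.


Lemma PiE (R : realFieldType) m n alpha (beta : 'cV[R]_m) (gamma : 'cV[R]_n) A q :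
  Pi alpha beta gamma A q = 2^-1 * Omega alpha beta gamma A (2 *: q).
Proof.
rewrite /Pi /Omega -scalemxAr !(dotcZl, dotcZr); by field.
Qed.

Lemma pi_to_omega (R : realFieldType) m n alpha (beta : 'cV[R]_m) (gamma : 'cV[R]_n) A q :
  is_maximizer (Pi alpha beta gamma) A q ->
  is_maximizer (Omega alpha beta gamma) A (2 *: q).
Proof.
move=> [hA hq hmax]; split => //.
  by move=> j; rewrite mxE; apply: mulr_ge0; [| exact: hq].
move=> A' q' hA' hq'.
have h := hmax A' (2^-1 *: q') hA'.
have : Pi alpha beta gamma A' (2^-1 *: q') <= Pi alpha beta gamma A q.
  apply: h => j; rewrite mxE; apply: mulr_ge0; [by rewrite invr_ge0 | exact: hq'].
rewrite !PiE scalerA divff ?scale1r; last by rewrite pnatr_eq0.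
have : (0 : R) < 2^-1 by rewrite invr_gt0.
move=> h2 h3; rewrite -(ler_pM2l h2) //.
Qed.

Theorem corollary1 (R : realFieldType) (m n : nat) (alpha : R)
    (beta : 'cV[R]_m) (gamma : 'cV[R]_n)
    (A1 : 'M[R]_(m, n)) (q1 : 'cV[R]_n)
    (A2 : 'M[R]_(m, n)) (q2 : 'cV[R]_n)
    (Ad : 'M[R]_(m, n)) (qd : 'cV[R]_n) :
  (2 <= n)%N -> (2 <= m)%N -> 0 < alpha -> norm2sq beta = 1 ->
  (forall i : 'I_n, 0 < gamma i 0) ->
  rg gamma <= 1 -> 1 < 2 + alpha -> 2 + alpha <= Rg gamma ->
  is_maximizer (Omega alpha beta gamma) A1 q1 ->
  is_maximizer (Pi alpha beta gamma) A2 q2 ->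
  is_equilibrium alpha beta gamma Ad qd ->
  Ad *m qd = beta -> qd = (2 + alpha)^-1 *: gamma ->
  [/\ sbar gamma A1 = sbar gamma A2,
      sbar gamma A2 = (1 - norm2sq gamma) / (n * (n - 1))%:R,
      (1 - norm2sq gamma) / (n * (n - 1))%:R
        < ((2 + alpha) ^+ 2 - norm2sq gamma) / (n * (n - 1))%:R &
      ((2 + alpha) ^+ 2 - norm2sq gamma) / (n * (n - 1))%:R = sbar gamma Ad].
Proof.
move=> n2 m2 a0 hb gp hrg h1 hR hmx1 hmx2 heq hAd hqd.
have n1 : (1 < n)%N by [].
have m1 : (1 < m)%N by [].
have hb' : dotc beta beta = 1 by exact: hb.
have norm1E : norm1 gamma = \sum_j gamma j 0.
  by apply: eq_bigr => j _; rewrite ger0_norm // ltW.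
have hrg' : forall k, 2 * gamma k 0 - \sum_j gamma j 0 <= 1.
  move=> k; apply: le_trans hrg; rewrite /rg -norm1E lerD2r ler_pM2l //.
  have -> : gamma k 0 = `|gamma k 0| by rewrite ger0_norm // ltW.
  rewrite /norminf; exact: le_bigmax.
have hR' : 1 < \sum_j gamma j 0 by rewrite -norm1E; move: hR; rewrite /Rg; lra.
have [e1 e2] := omega_max_opt n1 m1 a0 hb' gp hrg' hR' hmx1.
have [f1 f2] := omega_max_opt n1 m1 a0 hb' gp hrg' hR' (pi_to_omega hmx2).
have g1 : A1 *m gamma = beta by rewrite -e1.
have g2 : A2 *m gamma = beta by rewrite -f1.
have gd : Ad *m gamma = (2 + alpha) *: beta.
  rewrite -hAd hqd -scalemxAr scalerA divff ?scale1r //; lra.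
have [hA1 _ _] := hmx1.
have [hA2 _ _] := hmx2.
have [hAd' _ _] := heq.
rewrite (sbar_formula n1 hA1 g1) (sbar_formula n1 hA2 g2) (sbar_formula n1 hAd' gd).
rewrite hb' dotcZl dotcZr hb' mulr1 -expr2.
split => //.
have M0 : (0 : R) < (n * (n - 1))%:R.
  by rewrite ltr0n muln_gt0 subn_gt0 n1 andbT; apply: ltnW.
rewrite ltr_pM2r ?invr_gt0 //.
rewrite ltrD2r; nra.
Qed.
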